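(* Let $f_1,\ldots,f_N\colon[0,1]\to[0,1]$ be $C^1$-diffeomorphisms onto their images, $\mathcal I_P=\{i\colon f_i\text{ preserves orientation}\}$, $\mathcal I_R=\{i\colon f_i\text{ reverses orientation}\}$. Let $A=(a_{ij})_{i,j=1}^{2N}$ be given by $a_{ij}=1$ if ($i\in\mathcal I_P$ and $j\in\{1,\ldots,N\}$), or ($i\in\mathcal I_R$ and $j\in\{N+1,\ldots,2N\}$), or ($i-N\in\mathcal I_P$ and $j\in\{N+1,\ldots,2N\}$), or ($i-N\in\mathcal I_R$ and $j\in\{1,\ldots,N\}$), and $a_{ij}=0$ otherwise. Let $\Sigma_A\subset\{1,\ldots,2N\}^{\mathbb Z}$ be the set of $A$-admissible sequences (those $\omega$ with $a_{\omega_n\omega_{n+1}}=1$ for all $n$), $\sigma_A$ the shift on $\Sigma_A$, and $\sigma$ the shift on $\Sigma_N=\{1,\ldots,N\}^{\mathbb Z}$. Define $\pi\colon\Sigma_A\to\Sigma_N$ by $\pi(\omega)_n=\overline{\omega_n}$, where $\overline i=i$ for $i\le N$ and $\overline i=i-N$ for $i>N$. Then $\pi$ is a two-to-one semi-conjugation between $\sigma_A$ and $\sigma$: $\pi$ is continuous, surjective, $\pi\circ\sigma_A=\sigma\circ\pi$, and each point of $\Sigma_N$ has exactly two preimages under $\pi$. *)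

(* Defs.v *)
From HB Require Import structures.
From mathcomp Require Import all_boot all_order all_algebra.
From mathcomp Require Import all_classical all_reals all_analysis.
Set Implicit Arguments. Unset Strict Implicit. Unset Printing Implicit Defensive.
Import Order.TTheory GRing.Theory Num.Theory.
Import numFieldNormedType.Exports.
Local Open Scope classical_set_scope.
Local Open Scope ring_scope.

(* f : R -> R restricted to [0,1] is a C^1-diffeomorphism of [0,1] onto its
   image contained in [0,1]: f maps [0,1] into [0,1], is injective on [0,1],
   and has at every point of [0,1] a (one-sided at the endpoints) derivative
   g x, with g continuous on [0,1] and nowhere zero there (so that the inverse
   is C^1 too). *)
Definition I01 {R : realType} : set R := [set x : R | 0 <= x <= 1].

Definition C1_diffeo01 {R : realType} (f : R -> R) : Prop :=
  [/\ forall x, I01 x -> I01 (f x),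
      {in I01 &, injective f} &
      exists g : R -> R,
        [/\ {within (@I01 R), continuous g},
            forall x, I01 x -> g x != 0 &
            forall x, I01 x ->
              (fun y => (f y - f x) / (y - x)) @ within (@I01 R) x^' --> g x]].

Definition preserves_orientation {R : realType} (f : R -> R) : Prop :=
  {in I01 &, forall x y, x < y -> f x < f y}.
Definition reverses_orientation {R : realType} (f : R -> R) : Prop :=
  {in I01 &, forall x y, x < y -> f y < f x}.

(* Symbols {1,...,2N} are encoded (0-based) as 'I_(N + N):
   k < N stands for symbol k+1, k >= N stands for symbol k+1 (> N). *)

Definition sym_bar (N : nat) (i : 'I_(N + N)) : 'I_N :=
  match fintype.split i with inl k => k | inr k => k end.

Definition trans_mx {R : realType} (N : nat) (f : 'I_N -> R -> R)
    (i j : 'I_(N + N)) : nat :=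
  if `[< (exists k, fintype.split i = inl k /\ preserves_orientation (f k)) /\ (j < N)%N
      \/ (exists k, fintype.split i = inl k /\ reverses_orientation (f k)) /\ (N <= j)%N
      \/ (exists k, fintype.split i = inr k /\ preserves_orientation (f k)) /\ (N <= j)%N
      \/ (exists k, fintype.split i = inr k /\ reverses_orientation (f k)) /\ (j < N)%N >]
  then 1%N else 0%N.

Notation fullshift n := ({ptws int -> discrete_topology 'I_n}).

Definition sshift (n : nat) (w : fullshift n) : fullshift n := fun m => w (m + 1).

Definition SigmaA {R : realType} (N : nat) (f : 'I_N -> R -> R) : set (fullshift (N + N)) :=
  [set w | forall m : int, trans_mx f (w m) (w (m + 1)) = 1%N].

Definition proj_bar (N : nat) (w : fullshift (N + N)) : fullshift N :=
  fun m => sym_bar (w m).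

(* Main.v *)
Require Import Defs.
From HB Require Import structures.
From mathcomp Require Import all_boot all_order all_algebra.
From mathcomp Require Import all_classical all_reals all_analysis.
Import Order.TTheory GRing.Theory Num.Theory.
Import numFieldNormedType.Exports.
Local Open Scope classical_set_scope.
Local Open Scope ring_scope.

Lemma nbhs_coord (I : eqType) (T : discreteTopologicalType) (x : {ptws I -> T}) (i : I) :
  nbhs x [set v : {ptws I -> T} | v i = x i].
Proof.
have : (nbhs x) --> x by apply: cvg_id.
move=> /cvg_sup/(_ i) H.
apply: H.
apply: open_nbhs_nbhs; split => //.
exists [set x i] => //.
exact: discrete_open.
Qed.

Lemma ptws_cont (X : topologicalType) (I : Type) (T : topologicalType)
  (g : X -> {ptws I -> T}) : (forall i, continuous (fun x => g x i)) -> continuous g.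
Proof.
move=> c x; apply/cvg_sup => i.
exact: (@continuous_comp_initial _ X T (fun f => f i) g (c i) x).
Qed.

Lemma proj_bar_cont N : continuous (@proj_bar N).
Proof.
apply: ptws_cont => i x.
move=> U /= /nbhs_singleton Ux.
have H := @nbhs_coord _ _ x i.
rewrite nbhs_simpl.
apply: (filterS _ H) => v /= vi.
by rewrite /proj_bar vi.
Qed.
Lemma I01E (R : realType) : (@I01 R) = [set` `[0, 1]].
Proof. by apply/seteqP; split => x /=; rewrite /I01 /= in_itv. Qed.

Lemma diffeo_cont (R : realType) (f : R -> R) : C1_diffeo01 f ->
  {within I01, continuous f}.
Proof.
case=> _ _ [g [_ _ hd]].
apply/subspace_continuousP => x Ax.
have FF : Filter (within I01 x^') by apply: within_filter.
have hx : within I01 x^' --> x.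
  apply: cvg_trans (cvg_within _) _; exact: cvg_within.
have hid : (fun y => y - x) @ within I01 x^' --> x - x.
  exact: cvgB hx (cvg_cst x).
have h : (fun y => f x + (f y - f x) / (y - x) * (y - x)) @ within I01 x^' --> f x + g x * (x - x).
  by apply: cvgD; [exact: cvg_cst | apply: cvgM; [exact: hd | exact: hid]].
rewrite subrr mulr0 addr0 in h.
move=> P /= Pnb.
have := h P Pnb.
rewrite /= nbhs_simpl /within /=.
rewrite !nbhs_simpl /dnbhs /within /= => H.
move: H; rewrite /prop_near1 /= => H.
have H' : nbhs x (fun t => t != x -> I01 t -> P (f x + (f t - f x) / (t - x) * (t - x))) := H.
suff: nbhs x (fun t => I01 t -> P (f t)) by [].
apply: filterS H' => y Hy Iy.
have [->|yx] := eqVneq y x; first exact: nbhs_singleton Pnb.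
have := Hy yx Iy. rewrite /= divfK ?subr_eq0 //.
by rewrite addrC subrK.
Qed.

Lemma memI01 (R : realType) (x : R) : (x \in I01) = (x \in `[0, 1]).
Proof. by apply/idP/idP; rewrite in_itv /= inE. Qed.


Lemma diffeo_dich (R : realType) (f : R -> R) : C1_diffeo01 f ->
  preserves_orientation f \/ reverses_orientation f.
Proof.
move=> hf; have fc := @diffeo_cont _ f hf.
case: hf => _ finj _.
have fc' : {within [set` `[0, 1]], continuous f} by rewrite -I01E.
have finj' : {in `[0, 1] &, injective f}.
  by move=> x y; rewrite -!memI01; exact: finj.
case: (itv_continuous_inj_mono fc' finj') => H; [left|right] => x y xI yI xy;
  apply: H => //; by rewrite -memI01.
Qed.
Definition lay (N : nat) (i : 'I_(N + N)) : bool := (N <= i)%N.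
Definition rv (R : realType) N (f : 'I_N -> R -> R) (k : 'I_N) : bool :=
  `[< reverses_orientation (f k) >].

Arguments lay {N}.
Arguments rv {R N}.

Lemma trans_mx_eq1 (R : realType) N (f : 'I_N -> R -> R)
  (dich : forall k, preserves_orientation (f k) \/ reverses_orientation (f k))
  (nb : forall k, ~ (preserves_orientation (f k) /\ reverses_orientation (f k)))
  (i j : 'I_(N + N)) :
  trans_mx f i j = 1%N <-> lay j = lay i (+) rv f (sym_bar i).
Proof.
rewrite /trans_mx /sym_bar /lay /rv.
case: (splitP i) => k ik; rewrite ik.
- rewrite (leqNgt N k) ltn_ord /=.
  case: (ltnP j N) => hj.
  + rewrite /=.
    case: asboolP => H; split => // E.
    * move: H => [[[k' [[<-] Hp]] _]|[[[k' [[<-] Hr]] //]|[[[k' [//]]]|[[k' [//]]]]]].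
      by apply/esym/negbTE/asboolP => Hr; apply: (nb k).
    * exfalso; apply: H; left; split => //; exists k; split => //.
      case: (dich k) => // Hr; by move: E; rewrite asboolT.
  + rewrite /=.
    case: asboolP => H; split => // E.
    * move: H => [[[k' [[<-] Hp]] //]|[[[k' [[<-] Hr]] _]|[[[k' [//]]]|[[k' [//]]]]]].
      by apply/esym/asboolP.
    * exfalso; apply: H; right; left; split => //; exists k; split => //.
      by apply/asboolP; rewrite -E.
- rewrite leq_addr /=.
  case: (ltnP j N) => hj.
  + rewrite /=.
    case: asboolP => H; split => // E.
    * move: H => [[[k' [//]]]|[[[k' [//]]]|[[[k' [[<-] Hp]] //]|[[k' [[<-] Hr]] _]]]].
      by apply/esym/asboolP.
    * exfalso; apply: H; right; right; right; split => //; exists k; split => //.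
      by apply/asboolP; move: E => /esym /negbFE.
  + rewrite /=.
    case: asboolP => H; split => // E.
    * move: H => [[[k' [//]]]|[[[k' [//]]]|[[[k' [[<-] Hp]] _]|[[k' [[<-] Hr]] //]]]].
      by apply/esym => /=; apply/negP => /asboolP Hr; apply: (nb k).
    * exfalso; apply: H; right; right; left; split => //; exists k; split => //.
      case: (dich k) => // Hr; by move: E; rewrite asboolT.
Qed.

Lemma int_ind2 (P : int -> Prop) : P 0 -> (forall m, P m <-> P (m + 1)) -> forall m, P m.
Proof.
move=> P0 HP; case.
  elim=> // n IH; rewrite -[n.+1]addn1 PoszD; exact: (proj1 (HP n)).
elim=> [|n IH]; first exact: (proj2 (HP (Negz 0))).
apply: (proj2 (HP (Negz n.+1))).
suff -> : Negz n.+1 + 1 = Negz n by [].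
by rewrite !NegzE -[1]/(Posz 1) -addn1 PoszD opprD addrNK.
Qed.

Section Constr.
Variables (R : realType) (N : nat) (f : 'I_N -> R -> R) (s : fullshift N) (b : bool).

Fixpoint layP (n : nat) : bool :=
  if n is n'.+1 then layP n' (+) rv f (s (Posz n')) else b.
Fixpoint layN (n : nat) : bool :=
  if n is n'.+1 then layN n' (+) rv f (s (Negz n')) else b.
Definition L (m : int) : bool :=
  match m with Posz n => layP n | Negz n => layN n.+1 end.

Lemma L_step m : L (m + 1) = L m (+) rv f (s m).
Proof.
case: m => n.
  by rewrite -[1]/(Posz 1) -PoszD addn1.
case: n => [|n].
  by rewrite /= -addbA addbb addbF.
have -> : Negz n.+1 + 1 = Negz n.
  by rewrite !NegzE -[1]/(Posz 1) -addn1 PoszD opprD addrNK.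
by rewrite /= -addbA addbb addbF.
Qed.

Definition wcon : fullshift (N + N) :=
  fun m => if L m then rshift N (s m) else lshift N (s m).
End Constr.

Arguments wcon {R N}.
Arguments L {R N}.
Arguments L_step {R N f s b}.

Lemma sym_bar_l N (k : 'I_N) : sym_bar (lshift N k) = k.
Proof. by rewrite /sym_bar (unsplitK (inl k)). Qed.
Lemma sym_bar_r N (k : 'I_N) : sym_bar (rshift N k) = k.
Proof. by rewrite /sym_bar (unsplitK (inr k)). Qed.
Lemma lay_l N (k : 'I_N) : lay (lshift N k) = false.
Proof. by rewrite /lay /= leqNgt ltn_ord. Qed.
Lemma lay_r N (k : 'I_N) : lay (rshift N k) = true.
Proof. by rewrite /lay /= leq_addr. Qed.
Lemma ord_decomp N (i : 'I_(N + N)) :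
  i = if lay i then rshift N (sym_bar i) else lshift N (sym_bar i).
Proof.
rewrite /lay /sym_bar; case: (splitP i) => k ik; apply: val_inj => /=; rewrite ik.
  by rewrite leqNgt ltn_ord.
by rewrite leq_addr.
Qed.

Lemma nb_both (R : realType) (g : R -> R) :
  ~ (preserves_orientation g /\ reverses_orientation g).
Proof.
have h0 : (0 : R) \in I01 by rewrite memI01 in_itv /= lexx ler01.
have h1 : (1 : R) \in I01 by rewrite memI01 in_itv /= lexx ler01.
case=> P Q; have := P _ _ h0 h1 ltr01; have := Q _ _ h0 h1 ltr01.
by move=> /lt_trans H /H; rewrite ltxx.
Qed.

Theorem lemma3p2 (R : realType) (N : nat) (f : 'I_N -> R -> R)
  (hf : forall i, C1_diffeo01 (f i)) :
  [/\ {within SigmaA f, continuous (@proj_bar N)},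
      (forall s : fullshift N, exists2 w, SigmaA f w & proj_bar w = s),
      (forall w, SigmaA f w -> SigmaA f (sshift w)),
      (forall w, SigmaA f w -> proj_bar (sshift w) = sshift (proj_bar w)) &
      (forall s : fullshift N, exists w1 w2,
          [/\ w1 <> w2, SigmaA f w1 /\ SigmaA f w2,
              proj_bar w1 = s, proj_bar w2 = s &
              forall w, SigmaA f w -> proj_bar w = s -> w = w1 \/ w = w2])].
Proof.
have dich : forall k, preserves_orientation (f k) \/ reverses_orientation (f k).
  by move=> k; exact: (@diffeo_dich _ (f k) (hf k)).
have nb : forall k, ~ (preserves_orientation (f k) /\ reverses_orientation (f k)).
  by move=> k; exact: nb_both.
have Teq := @trans_mx_eq1 R N f dich nb.
have projw : forall s b, proj_bar (wcon f s b) = s.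
  move=> s b; apply/funext => m; rewrite /proj_bar /wcon.
  by case: (L f s b m); rewrite ?sym_bar_l ?sym_bar_r.
have layw : forall s b m, lay (wcon f s b m) = L f s b m.
  by move=> s b m; rewrite /wcon; case: (L f s b m); rewrite ?lay_l ?lay_r.
have symw : forall s b m, sym_bar (wcon f s b m) = s m.
  by move=> s b m; have := projw s b; move/(congr1 (fun w => w m)).
have adm : forall s b, SigmaA f (wcon f s b).
  move=> s b m; apply/Teq.
  by rewrite !layw symw L_step.
split.
- apply: continuous_subspaceT; exact: proj_bar_cont.
- by move=> s; exists (wcon f s true).
- by move=> w Hw m; exact: (Hw (m + 1)).
- by [].
move=> s; exists (wcon f s true), (wcon f s false); split => //.
- move=> E; have := congr1 (fun w : fullshift (N + N) => lay (w 0)) E.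
  by rewrite /= !layw.
- move=> w Hw Pw.
  have symw' : forall m, sym_bar (w m) = s m.
    by move=> m; rewrite -Pw.
  have key : forall m, lay (w m) = L f s (lay (w 0)) m.
    apply: int_ind2 => // m.
    have := proj1 (Teq _ _) (Hw m); rewrite L_step symw' => ->.
    by split => [->|/addIb].
  have E : w = wcon f s (lay (w 0)).
    apply/funext => m; rewrite {1}(ord_decomp _ (w m)) key symw' /wcon //.
  by case: (lay (w 0)) E; [left|right].
Qed.
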